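(* Let $K$ be a field, $d\ge2$ an integer, and $a_1,\dots,a_d\in K$ algebraically independent over the prime field of $K$. If the characteristic $p$ of $K$ is positive, suppose also $d\ge p$. Then the polynomial $a_1z+\cdots+a_dz^d\in K[z]$ has no parabolic periodic point.
   Context: A periodic point $z_0\in K$ of a polynomial $P$, of period $n$ (i.e. $P^n(z_0)=z_0$), is parabolic if its multiplier $(P^n)'(z_0)$ is a root of unity. *)

(* Defs.v *)
From HB Require Import structures.
From mathcomp Require Import all_boot all_order all_algebra.
From mathcomp Require Import mpoly.
Set Implicit Arguments. Unset Strict Implicit. Unset Printing Implicit Defensive.
Import GRing.Theory.
Local Open Scope ring_scope.

Definition in_prime_field (K : fieldType) (x : K) : Prop :=
  exists m n : int, n%:~R != 0 :> K /\ x = m%:~R / n%:~R.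

(* a_0, ..., a_{d-1} are algebraically independent over the prime field:
   no nonzero polynomial with coefficients in the prime field vanishes at a. *)
Definition alg_indep_prime (K : fieldType) (d : nat) (a : 'I_d -> K) : Prop :=
  forall Q : {mpoly K[d]}, (forall m, in_prime_field (Q@_m)) ->
    Q != 0 -> Q.@[a] != 0.

Definition poly_iter (K : fieldType) (P : {poly K}) (n : nat) : {poly K} :=
  iter n (fun q => P \Po q) (polyX K).

Definition root_of_unity (K : fieldType) (x : K) : Prop :=
  exists m : nat, (0 < m)%N /\ x ^+ m = 1.

Definition periodic_point (K : fieldType) (P : {poly K}) (n : nat) (z0 : K) :=
  (0 < n)%N /\ (poly_iter P n).[z0] = z0.

Definition multiplier (K : fieldType) (P : {poly K}) (n : nat) (z0 : K) : K :=
  ((poly_iter P n)^`()).[z0].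

Definition parabolic_periodic_point (K : fieldType) (P : {poly K}) (z0 : K) :=
  exists n, periodic_point P n z0 /\ root_of_unity (multiplier P n z0).

(* Main.v *)
Require Import Defs.
From HB Require Import structures.
From mathcomp Require Import all_boot all_order all_algebra.
From mathcomp Require Import mpoly.
From mathcomp Require Import ring.
Import GRing.Theory.
Local Open Scope ring_scope.
Set Implicit Arguments. Unset Strict Implicit. Unset Printing Implicit Defensive.
Section Iter.
Variable (K : fieldType) (P : {poly K}).

Lemma poly_iterS n : poly_iter P n.+1 = P \Po poly_iter P n.
Proof. by []. Qed.

Lemma horner_iterD a b z :
  (poly_iter P (a + b)).[z] = (poly_iter P a).[(poly_iter P b).[z]].
Proof.
elim: a => [|a IH]; first by rewrite add0n /poly_iter /= hornerX.
by rewrite addSn !poly_iterS !horner_comp IH.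
Qed.

Lemma deriv_iter n z :
  (poly_iter P n)^`().[z] = \prod_(j < n) P^`().[(poly_iter P j).[z]].
Proof.
elim: n => [|n IH]; first by rewrite big_ord0 /poly_iter /= derivX hornerC.
by rewrite poly_iterS deriv_comp hornerM horner_comp IH big_ord_recr /= mulrC.
Qed.

End Iter.

Section Integral.
Variables (K : fieldType) (R0 : comNzRingType) (phi : {rmorphism R0 -> K}).
Local Notation I := (integralOver phi).

Lemma integral_sum (J : Type) (r : seq J) (Pr : pred J) (F : J -> K) :
  (forall j, Pr j -> I (F j)) -> I (\sum_(j <- r | Pr j) F j).
Proof.
move=> H; apply: (big_ind I) => //; first exact: integral0.
by move=> x y; apply: integral_add.
Qed.

Lemma integral_prod (J : Type) (r : seq J) (Pr : pred J) (F : J -> K) :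
  (forall j, Pr j -> I (F j)) -> I (\prod_(j <- r | Pr j) F j).
Proof.
move=> H; apply: (big_ind I) => //; first exact: integral1.
by move=> x y; apply: integral_mul.
Qed.

Lemma integral_exp x n : I x -> I (x ^+ n).
Proof.
move=> Ix; elim: n => [|n IH]; first by rewrite expr0; apply: integral1.
by rewrite exprS; apply: integral_mul.
Qed.

Lemma integral_natr n : I (n%:R).
Proof. exact: integral_nat. Qed.

Lemma integral_phi x : I (phi x).
Proof. exact: integral_id. Qed.

Definition ipoly (p : {poly K}) := forall i, I p`_i.

Lemma ipolyD p q : ipoly p -> ipoly q -> ipoly (p + q).
Proof. by move=> Hp Hq i; rewrite coefD; apply: integral_add. Qed.

Lemma ipolyB p q : ipoly p -> ipoly q -> ipoly (p - q).
Proof. by move=> Hp Hq i; rewrite coefB; apply: integral_sub. Qed.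

Lemma ipolyM p q : ipoly p -> ipoly q -> ipoly (p * q).
Proof.
move=> Hp Hq i; rewrite coefM; apply: integral_sum => j _.
exact: integral_mul.
Qed.

Lemma ipolyZ c p : I c -> ipoly p -> ipoly (c *: p).
Proof. by move=> Hc Hp i; rewrite coefZ; apply: integral_mul. Qed.

Lemma ipolyXn n : ipoly 'X^n.
Proof. by move=> i; rewrite coefXn; apply: integral_natr. Qed.

Lemma ipolyX : ipoly 'X.
Proof. by move=> i; rewrite coefX; apply: integral_natr. Qed.

Lemma ipoly1 : ipoly 1.
Proof. by move=> i; rewrite coef1; apply: integral_natr. Qed.

Lemma ipoly_sum (J : Type) (r : seq J) (Pr : pred J) (F : J -> {poly K}) :
  (forall j, Pr j -> ipoly (F j)) -> ipoly (\sum_(j <- r | Pr j) F j).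
Proof.
move=> H i; rewrite coef_sum; apply: integral_sum => j Pj; exact: H.
Qed.

Lemma ipoly_exp p n : ipoly p -> ipoly (p ^+ n).
Proof.
move=> Hp; elim: n => [|n IH]; first by rewrite expr0; apply: ipoly1.
by rewrite exprS; apply: ipolyM.
Qed.

Lemma ipoly_comp p q : ipoly p -> ipoly q -> ipoly (p \Po q).
Proof.
move=> Hp Hq; rewrite comp_polyE; apply: ipoly_sum => j _.
by apply: ipolyZ; [apply: Hp | apply: ipoly_exp].
Qed.

Lemma ipoly_root p u : p \is monic -> root p u -> ipoly p -> I u.
Proof.
move=> mp ru Hp; apply: integral_root_monic mp ru _.
by apply/integral_poly.
Qed.

End Integral.
Section Periodic.
Variables (K : fieldType) (R0 : comNzRingType) (phi : {rmorphism R0 -> K}).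
Local Notation I := (integralOver phi).
Variables (k : nat) (a : 'I_k.+1 -> K) (sig : K).
Hypothesis Isig : I sig.
Hypothesis Isa : forall i, I (sig * a i).
Hypothesis top : sig * a ord_max = 1.
Hypothesis k_gt0 : (0 < k)%N.

Definition Pa : {poly K} := \sum_(i < k.+1) a i *: 'X ^+ i.+1.

Lemma hornerPa w : Pa.[w] = \sum_(i < k.+1) a i * w ^+ i.+1.
Proof. by rewrite horner_sum; apply: eq_bigr => i _; rewrite hornerZ hornerXn. Qed.

Fixpoint Nn j := if j is j'.+1 then (Nn j' * k.+1).+1 else 0%N.

Definition Tp j : {poly K} :=
  \sum_(i < k.+1) ((sig * a i) * sig ^+ (Nn j * (k - i))) *: 'X ^+ i.+1.

Fixpoint Up j : {poly K} := if j is j'.+1 then Tp j' \Po Up j' else 'X.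

Lemma Up_horner j z : (Up j).[z] = sig ^+ Nn j * (poly_iter Pa j).[z].
Proof.
elim: j => [|j IH]; first by rewrite /= expr0 mul1r /poly_iter /= hornerX.
rewrite poly_iterS [Up _]/= !horner_comp IH hornerPa /Tp horner_sum.
rewrite mulr_sumr; apply: eq_bigr => i _.
rewrite hornerZ hornerXn.
set y := (poly_iter Pa j).[z].
have E : (Nn j * k.+1).+1 = (1 + Nn j * (k - i) + Nn j * i.+1)%N.
  by rewrite -addnA -mulnDr addnS subnK ?add1n // -ltnS ltn_ord.
rewrite [Nn j.+1]/= E !exprD expr1 exprMn -exprM.
ring.
Qed.

Lemma Tp_monic j : Tp j \is monic.
Proof.
rewrite /Tp big_ord_recr /= subnn muln0 expr0 mulr1 top scale1r addrC.
rewrite monicE lead_coefDl ?lead_coefXn //.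
rewrite size_polyXn ltnS; apply: (leq_trans (size_sum _ _ _)).
apply/bigmax_leqP => i _; apply: (leq_trans (size_scale_leq _ _)).
by rewrite size_polyXn ltnS ltn_ord.
Qed.

Lemma Tp_size j : size (Tp j) = k.+2.
Proof.
rewrite /Tp big_ord_recr /= subnn muln0 expr0 mulr1 top scale1r addrC.
rewrite size_polyDl ?size_polyXn // ltnS; apply: (leq_trans (size_sum _ _ _)).
apply/bigmax_leqP => i _; apply: (leq_trans (size_scale_leq _ _)).
by rewrite size_polyXn ltnS ltn_ord.
Qed.

Lemma size_comp_ex (p q : {poly K}) : p != 0 -> (1 < size q)%N ->
  size (p \Po q) = ((size p).-1 * (size q).-1).+1.
Proof.
move=> p0 q1; rewrite -size_comp_poly prednK // lt0n size_poly_eq0.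
by rewrite comp_poly_eq0.
Qed.

Lemma Up_monic_size j : Up j \is monic /\ (1 < size (Up j))%N.
Proof.
elim: j => [|j [IHm IHs]]; first by rewrite /= monicX size_polyX.
split.
  by rewrite /= monicE lead_coef_comp // (monicP (Tp_monic j)) (monicP IHm) expr1n mulr1.
rewrite /= size_comp_ex ?monic_neq0 ?Tp_monic // Tp_size /= ltnS muln_gt0 /=.
by rewrite -ltnS prednK ?IHs // ltnW.
Qed.

Lemma Up_size_gt2 j : (0 < j)%N -> (2 < size (Up j))%N.
Proof.
case: j => // j _; have [_ Hs] := Up_monic_size j.
rewrite /= size_comp_ex ?monic_neq0 ?Tp_monic // Tp_size /= ltnS.
apply: (@leq_trans (k.+1 * 1)); first by rewrite muln1.
by rewrite leq_mul2l /= -ltnS prednK // ltnW.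
Qed.

Lemma ipoly_Tp j : ipoly phi (Tp j).
Proof.
apply: ipoly_sum => i _; apply: ipolyZ; last exact: ipolyXn.
by apply: integral_mul; [apply: Isa | apply: integral_exp].
Qed.

Lemma ipoly_Up j : ipoly phi (Up j).
Proof.
elim: j => [|j IH]; first exact: ipolyX.
by apply: ipoly_comp => //; apply: ipoly_Tp.
Qed.

Lemma periodic_integral n w :
  (0 < n)%N -> (poly_iter Pa n).[w] = w -> I w.
Proof.
move=> n_gt0 per.
pose F := Up n - (sig ^+ Nn n) *: 'X.
have [Um _] := Up_monic_size n.
have Fm : F \is monic.
  rewrite /F monicE lead_coefDl ?(monicP Um) //.
  rewrite size_opp; apply: leq_ltn_trans (size_scale_leq _ _) _.
  by rewrite size_polyX; apply: Up_size_gt2.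
apply: (ipoly_root Fm).
  by rewrite /root /F hornerD hornerN hornerZ hornerX Up_horner per subrr.
apply: ipolyB; first exact: ipoly_Up.
by apply: ipolyZ; [apply: integral_exp | apply: ipolyX].
Qed.

End Periodic.
Section Core.
Variables (K : fieldType) (R0 : comNzRingType) (phi : {rmorphism R0 -> K}).
Local Notation I := (integralOver phi).
Variables (k : nat) (a : 'I_k.+1 -> K) (sig : K).
Hypothesis Isig : I sig.
Hypothesis Isa : forall i, I (sig * a i).
Hypothesis top : sig * a ord_max = 1.
Hypothesis k_gt0 : (0 < k)%N.
Variables (Bf Vf : K -> K) (r : K).
Hypothesis Ir : I r.
Hypothesis HB : forall w, I w -> I (Pa a).[w] ->
  [/\ I (Bf w), I (Vf w) & Bf w * (sig * (Pa a)^`().[w]) = r - sig * Vf w].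

Lemma integral_root_unity (x : K) m : (0 < m)%N -> x ^+ m = 1 -> I x.
Proof.
move=> m_gt0 xm; exists ('X^m - 1); first exact: monic_Xn_sub_1.
by rewrite rmorphB /= map_polyXn rmorph1 /root !hornerE xm subrr.
Qed.

Lemma core n z0 m : (0 < n)%N -> (poly_iter (Pa a) n).[z0] = z0 ->
  (0 < m)%N -> (multiplier (Pa a) n z0) ^+ m = 1 ->
  exists Y, I Y /\ r ^+ n = sig * Y.
Proof.
move=> n_gt0 per m_gt0 lm.
pose z j := (poly_iter (Pa a) j).[z0].
have Iz j : I (z j).
  apply: (periodic_integral Isig Isa top k_gt0 n_gt0).
  by rewrite /z -horner_iterD addnC horner_iterD per.
have Pz j : (Pa a).[z j] = z j.+1 by rewrite /z poly_iterS horner_comp.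
have Il := integral_root_unity m_gt0 lm.
have claim l : exists Z, I Z /\
    \prod_(j < l) (Bf (z j) * (sig * (Pa a)^`().[z j])) = r ^+ l - sig * Z.
  elim: l => [|l [Z [IZ EZ]]].
    by exists 0; split; [apply: integral0 | rewrite big_ord0 expr0 mulr0 subr0].
  have [IB IV EB] := HB (Iz l) (eq_ind_r I (Iz l.+1) (Pz l)).
  exists (r ^+ l * Vf (z l) + Z * r - sig * Z * Vf (z l)); split.
    apply: integral_sub; first apply: integral_add; try apply: integral_mul;
      try apply: integral_mul; try apply: integral_exp; by [].
  rewrite big_ord_recr /= EZ EB exprS; ring.
have [Z [IZ EZ]] := claim n.
move: EZ; rewrite big_split /= big_split /=.
rewrite prodr_const card_ord -deriv_iter -/(multiplier (Pa a) n z0).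
move: lm Il; set l := multiplier _ _ _ => lm Il E.
exists (Z + (\prod_(j < n) Bf (z j)) * sig ^+ n.-1 * l); split.
  apply: integral_add => //; apply: integral_mul => //.
  apply: integral_mul; last exact: integral_exp.
  by apply: integral_prod => j _; have [] := HB (Iz j) (eq_ind_r I (Iz j.+1) (Pz j)).
have Es : sig ^+ n = sig * sig ^+ n.-1 by rewrite -exprS prednK.
by rewrite -(subrK (sig * Z) (r ^+ n)) -E Es; ring.
Qed.

End Core.
Section Final.
Variables (K : fieldType) (k : nat) (x : 'I_k.+1 -> K).
Definition phix : {rmorphism {mpoly int[k.+1]} -> K} := mmap intr x.
Hypothesis indep : forall H, phix H = 0 -> forall m, (H@_m)%:~R = 0 :> K.

Lemma mmap_zero (e : 'I_k.+1 -> K) (H : {mpoly int[k.+1]}) :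
  (forall m, (H@_m)%:~R = 0 :> K) -> mmap intr e H = 0.
Proof. by move=> H0; rewrite /mmap big1_seq // => m _; rewrite H0 mul0r. Qed.

Lemma final (rh : {mpoly int[k.+1]}) (e : 'I_k.+1 -> K) n Y :
  e ord_max = 0 -> mmap intr e rh != 0 -> integralOver phix Y ->
  (phix rh) ^+ n = x ord_max * Y -> False.
Proof.
move=> e0 nz [p pm rt] E.
pose k0 := (size p).-1.
have sp : size p = k0.+1 by rewrite /k0 prednK // lt0n size_poly_eq0 monic_neq0.
pose H := \sum_(i < k0.+1) p`_i * rh ^+ (n * i) * 'X_ord_max ^+ (k0 - i).
have pH : phix H = x ord_max ^+ k0 * (map_poly phix p).[Y].
  have sm : size (map_poly phix p) = size p.
    by apply: size_map_poly_id0; rewrite (monicP pm) rmorph1 oner_neq0.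
  rewrite (horner_coef_wide _ (eq_leq sm)) sp.
  rewrite rmorph_sum mulr_sumr; apply: eq_bigr => i _.
  rewrite !rmorphM !rmorphXn /= coef_map /=.
  have -> : phix 'X_ord_max = x ord_max by rewrite /phix /= mmapX mmap1U.
  rewrite exprM E exprMn.
  have -> : x ord_max ^+ k0 = x ord_max ^+ (k0 - i) * x ord_max ^+ i.
    by rewrite -exprD subnK // -ltnS ltn_ord.
  ring.
have Hz : phix H = 0 by rewrite pH (rootP rt) mulr0.
have := mmap_zero e (indep Hz).
rewrite /H rmorph_sum big_ord_recr /= big1 => [|i _].
  rewrite add0r subnn expr0 mulr1 !rmorphM !rmorphXn /=.
  have -> : p`_k0 = 1 by rewrite -(monicP pm) lead_coefE sp.
  rewrite rmorph1 mul1r => /eqP; by rewrite expf_eq0 (negbTE nz) andbF.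
rewrite !rmorphM !rmorphXn /=.
have -> : mmap intr e 'X_ord_max = 0 by rewrite mmapX mmap1U.
by rewrite expr0n subn_eq0 leqNgt ltn_ord /= mulr0.
Qed.

End Final.
Section Indep.
Variables (K : fieldType) (k : nat) (a : 'I_k.+1 -> K) (c : nat).
Hypothesis ind : alg_indep_prime a.
Hypothesis atop : a ord_max != 0.

Definition sigma := (a ord_max)^-1.
Definition xv (i : 'I_k.+1) : K :=
  if i == ord_max then sigma else if (i < c)%N then sigma * a i else a i.

Definition wgt (m : 'X_{1..k.+1}) : nat :=
  (m ord_max + \sum_(i < k.+1 | i != ord_max) (if (i < c)%N then m i else 0))%N.

Lemma wgt_le m : (wgt m <= mdeg m)%N.
Proof.
rewrite /wgt mdegE [X in (_ <= X)%N](bigD1 ord_max) //= leq_add2l.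
apply: leq_sum => i _.
by case: ifP.
Qed.

Definition shm (D : nat) (m : 'X_{1..k.+1}) : 'X_{1..k.+1} :=
  [multinom (if i == ord_max then (D - wgt m)%N else m i) | i < k.+1].

Lemma shm_inj D m1 m2 : (wgt m1 <= D)%N -> (wgt m2 <= D)%N ->
  shm D m1 = shm D m2 -> m1 = m2.
Proof.
move=> h1 h2 E.
have Eo i : i != ord_max -> m1 i = m2 i.
  move=> ni; move/mnmP: E => /(_ i); by rewrite !mnmE (negbTE ni).
have Ew : wgt m1 = wgt m2.
  move/mnmP: E => /(_ ord_max); rewrite !mnmE eqxx => E'.
  by rewrite -(subKn h1) E' subKn.
apply/mnmP => i; have [-> | ni] := eqVneq i ord_max; last exact: Eo.
move: Ew; rewrite /wgt (eq_bigr (fun i : 'I_k.+1 => if (i < c)%N then m2 i else 0)).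
  by move/addIn.
by move=> j nj; rewrite Eo.
Qed.

Lemma prod_shm D m : (wgt m <= D)%N ->
  \prod_(i < k.+1) a i ^+ (shm D m i) = a ord_max ^+ D * mmap1 xv m.
Proof.
move=> le; rewrite /mmap1 (bigD1 ord_max) //= [in RHS](bigD1 ord_max) //=.
rewrite mnmE eqxx /xv eqxx.
rewrite (eq_bigr (fun i : 'I_k.+1 => a i ^+ m i)); last first.
  by move=> i ni; rewrite mnmE (negbTE ni).
rewrite [in RHS](eq_bigr (fun i : 'I_k.+1 => a i ^+ m i * sigma ^+ (if (i < c)%N then m i else 0)));
  last first.
  move=> i ni; rewrite (negbTE ni); case: ifP => _; last by rewrite expr0 mulr1.
  by rewrite exprMn mulrC.
rewrite big_split /= prodrXr.
have -> : a ord_max ^+ D = a ord_max ^+ (D - wgt m) * a ord_max ^+ wgt m.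
  by rewrite -exprD subnK.
have Hs : a ord_max ^+ wgt m * (sigma ^+ m ord_max *
    sigma ^+ (\sum_(i < k.+1 | i != ord_max) (if (i < c)%N then m i else 0))) = 1.
  by rewrite -exprD -/(wgt m) -exprMn /sigma mulfV // expr1n.
rewrite -[LHS]mulr1 -Hs.
move: (\prod_(i < k.+1 | i != ord_max) a i ^+ m i) => A.
move: (sigma ^+ (\sum_(i < k.+1 | i != ord_max) (if (i < c)%N then m i else 0))) => s3.
move: (sigma ^+ m ord_max) (a ord_max ^+ (D - wgt m)) (a ord_max ^+ wgt m) => s1 e1 e2.
ring.
Qed.

Lemma indep_int (H : {mpoly int[k.+1]}) :
  mmap intr xv H = 0 -> forall m, (H@_m)%:~R = 0 :> K.
Proof.
move=> H0 m0; apply/eqP; apply: contraT => nz.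
have m0s : m0 \in msupp H.
  by rewrite mcoeff_msupp; apply: contraNneq nz => ->; rewrite mulr0z.
pose D := msize H.
have wD m : m \in msupp H -> (wgt m <= D)%N.
  by move=> ms; apply: leq_trans (wgt_le m) (ltnW (msize_mdeg_lt ms)).
pose Q : {mpoly K[k.+1]} :=
  \sum_(m <- msupp H) (H@_m)%:~R *: 'X_[shm D m].
have Qpr m' : in_prime_field (Q@_m').
  exists (\sum_(m <- msupp H) H@_m * (shm D m == m')%:R), 1; split.
    by rewrite oner_neq0.
  rewrite divr1 /Q raddf_sum rmorph_sum /=; apply: eq_bigr => m _.
  by rewrite mcoeffZ mcoeffX rmorphM /= rmorph_nat.
have Qnz : Q != 0.
  apply/eqP => /mpolyP /(_ (shm D m0)); rewrite mcoeff0 /Q raddf_sum /=.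
  rewrite (bigD1_seq m0) ?msupp_uniq //= big1_seq => [|m /andP [nm ms]].
    by rewrite mcoeffZ mcoeffX eqxx mulr1 addr0 => E; move: nz; rewrite E eqxx.
  rewrite mcoeffZ mcoeffX; case: eqP => [E|_]; last by rewrite mulr0.
  by move: nm; rewrite (shm_inj (wD _ ms) (wD _ m0s) E) eqxx.
have := ind Qpr Qnz.
have -> : Q.@[a] = a ord_max ^+ D * mmap intr xv H.
  rewrite /Q raddf_sum /= /mmap mulr_sumr; apply: eq_big_seq => m ms.
  by rewrite mevalZ mevalX prod_shm ?wD // mulrCA.
by rewrite H0 mulr0 eqxx.
Qed.

End Indep.
Section Assemble.
Variables (K : fieldType) (k : nat) (a : 'I_k.+1 -> K) (c : nat).
Hypothesis ind : alg_indep_prime a.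
Hypothesis k_gt0 : (0 < k)%N.

Lemma atop_neq0 : a ord_max != 0.
Proof.
have Hp : forall m, in_prime_field (('X_ord_max : {mpoly K[k.+1]})@_m).
  move=> m; rewrite mcoeffX; exists (U_(ord_max)%MM == m)%:R, 1; split.
    by rewrite oner_neq0.
  by rewrite rmorph1 divr1 rmorph_nat.
have Hnz : ('X_ord_max : {mpoly K[k.+1]}) != 0.
  apply/eqP => /mpolyP /(_ U_(ord_max)%MM); rewrite mcoeffX eqxx mcoeff0.
  by move/eqP; rewrite oner_eq0.
by have := ind Hp Hnz; rewrite mevalXU.
Qed.

Local Notation x := (xv a c).
Local Notation phi := (phix x).
Local Notation I := (integralOver phi).
Local Notation sig := (sigma a).

Lemma phiX i : phi 'X_i = x i.
Proof. by rewrite /phix /= mmapX mmap1U. Qed.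

Lemma I_x i : I (x i).
Proof. by rewrite -phiX; apply: integral_id. Qed.

Lemma sig_top : sig * a ord_max = 1.
Proof. by rewrite /sigma mulVf // atop_neq0. Qed.

Lemma I_sig : I sig.
Proof. by have := I_x ord_max; rewrite /xv eqxx. Qed.

Lemma I_sa i : I (sig * a i).
Proof.
have [-> | ni] := eqVneq i ord_max; first by rewrite sig_top; apply: integral1.
case: (ltnP i c) => ic.
  by have := I_x i; rewrite /xv (negbTE ni) ic.
apply: integral_mul; first exact: I_sig.
by have := I_x i; rewrite /xv (negbTE ni) ltnNge ic.
Qed.

Lemma assemble (rh : {mpoly int[k.+1]}) (e : 'I_k.+1 -> K) (Bf Vf : K -> K) :
  e ord_max = 0 -> mmap intr e rh != 0 ->
  (forall w, I w -> I (Pa a).[w] ->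
     [/\ I (Bf w), I (Vf w) &
         Bf w * (sig * (Pa a)^`().[w]) = phi rh - sig * Vf w]) ->
  forall z0, ~ parabolic_periodic_point (Pa a) z0.
Proof.
move=> e0 nz HB z0 [n [[n_gt0 per] [m [m_gt0 lm]]]].
have Ir : I (phi rh) by apply: integral_id.
have [Y [IY EY]] := core I_sig I_sa sig_top k_gt0 Ir HB n_gt0 per m_gt0 lm.
apply: (final (indep_int ind atop_neq0) e0 nz IY).
by rewrite [X in _ = X * _]/xv eqxx; exact: EY.
Qed.

End Assemble.

Section Derivs.
Variables (K : fieldType) (k : nat) (a : 'I_k.+1 -> K).

Lemma hornerdPa w :
  (Pa a)^`().[w] = \sum_(i < k.+1) a i * (w ^+ i *+ i.+1).
Proof.
rewrite /Pa raddf_sum horner_sum; apply: eq_bigr => i _.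
by rewrite /= derivZ derivXn hornerZ hornerMn hornerXn.
Qed.

End Derivs.
Lemma bez1 (R : comNzRingType) (w b : R) (k1 : nat) :
  (k1.+1%:R * b + k1.+2%:R * w ^+ k1.+1) * (k1.+2%:R * w ^+ k1.+1 + b)
  + (- (k1.+2%:R ^+ 2) * w ^+ k1) * (w ^+ k1.+2 + b * w) = k1.+1%:R * b ^+ 2.
Proof. rewrite !exprS; ring. Qed.

Lemma bez2 (R : comNzRingType) (w b1 b2 : R) (k2 : nat) :
  let B := (b1 * b2 - 2 * b2 ^+ 2 * w) * (b2 - w ^+ k2.+1) + 4 * b2 ^+ 3 * w in
  let A := (b1 * b2 - 2 * b2 ^+ 2 * w) * w ^+ k2 - 4 * b2 ^+ 3 in
  B * (w ^+ k2.+2 + 2 * b2 * w + b1) + A * (w ^+ k2.+3 + b2 * w ^+ 2 + b1 * w)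
  = b1 ^+ 2 * b2 ^+ 2.
Proof. move=> B A; rewrite /B /A !exprS; ring. Qed.
Lemma case1 (K : fieldType) (k1 : nat) (a : 'I_k1.+2 -> K) :
  alg_indep_prime a -> (k1.+1%:R != 0 :> K) ->
  forall z0, ~ parabolic_periodic_point (Pa a) z0.
Proof.
move=> ind hk.
have k_gt0 : (0 < k1.+1)%N by [].
pose x := xv a 1.
pose sig := sigma a.
pose b := x ord0.
have Eb : b = sig * a ord0 by rewrite /b /x /xv.
have Emid i : (i != ord_max) && (i != ord0) -> x i = a i.
  move=> /andP [ni n0]; rewrite /x /xv (negbTE ni).
  by case: i n0 {ni} => [[|i] Hi].
pose Rv (w : K) := \sum_(i < k1.+2 | (i != ord_max) && (i != ord0)) a i * w ^+ i.+1.
pose Rdv (w : K) := \sum_(i < k1.+2 | (i != ord_max) && (i != ord0))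
                 a i * (w ^+ i *+ i.+1).
pose Bf (w : K) := k1.+1%:R * b + k1.+2%:R * w ^+ k1.+1.
pose Af (w : K) : K := - (k1.+2%:R ^+ 2) * w ^+ k1.
pose Vf (w : K) := Af w * (Pa a).[w] - Af w * Rv w - Bf w * Rdv w.
have st := sig_top ind.
apply: (@assemble _ _ a 1 ind k_gt0 (k1.+1%:R * 'X_ord0 ^+ 2)
          (fun i => if i == ord_max then 0 else 1) Bf Vf).
- by rewrite eqxx.
- rewrite rmorphM rmorph_nat rmorphXn /= mmapX mmap1U /=.
  by rewrite expr1n mulr1.
move=> w Iw IP.
have Ib : integralOver (phix x) b by apply: I_x.
have IRv : integralOver (phix x) (Rv w).
  apply: integral_sum => i Hi; apply: integral_mul; last exact: integral_exp.
  by rewrite -Emid //; apply: I_x.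
have IRdv : integralOver (phix x) (Rdv w).
  apply: integral_sum => i Hi; apply: integral_mul.
    by rewrite -Emid //; apply: I_x.
  by rewrite -mulr_natl; apply: integral_mul; [apply: integral_natr|apply: integral_exp].
have IB : integralOver (phix x) (Bf w).
  apply: integral_add; apply: integral_mul; try apply: integral_natr; by [|apply: integral_exp].
have IA : integralOver (phix x) (Af w).
  apply: integral_mul; first by apply: integral_opp; apply: integral_exp; apply: integral_natr.
  exact: integral_exp.
split => //.
  apply: integral_sub; first apply: integral_sub; by apply: integral_mul.
have EP : sig * (Pa a).[w] = (w ^+ k1.+2 + b * w) + sig * Rv w.
  rewrite hornerPa mulr_sumr (bigD1 ord_max) //= (bigD1 ord0) //= /Rv mulr_sumr.
  by rewrite mulrA st mul1r expr1 Eb mulrA addrA.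
have EdP : sig * (Pa a)^`().[w] = (k1.+2%:R * w ^+ k1.+1 + b) + sig * Rdv w.
  rewrite hornerdPa mulr_sumr (bigD1 ord_max) //= (bigD1 ord0) //= /Rdv mulr_sumr.
  by rewrite mulrA st mul1r expr0 mulr1n Eb mulr1 addrA mulr_natl.
have Er : phix x (k1.+1%:R * 'X_ord0 ^+ 2) = k1.+1%:R * b ^+ 2.
  by rewrite rmorphM rmorph_nat rmorphXn /= phiX.
have Bez := bez1 w b k1.
rewrite Er -Bez EdP.
have -> : sig * Vf w = Af w * (sig * (Pa a).[w]) - sig * (Af w * Rv w + Bf w * Rdv w).
  by rewrite /Vf; ring.
rewrite EP /Bf /Af; ring.
Qed.
Lemma case2 (K : fieldType) (k2 : nat) (a : 'I_k2.+3 -> K) :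
  alg_indep_prime a -> (k2.+2%:R == 0 :> K) ->
  forall z0, ~ parabolic_periodic_point (Pa a) z0.
Proof.
move=> ind /eqP hk.
have k_gt0 : (0 < k2.+2)%N by [].
have hk3 : k2.+3%:R = 1 :> K by rewrite mulrSr hk add0r.
pose i1 : 'I_k2.+3 := @Ordinal k2.+3 1 isT.
pose x := xv a 2.
pose sig := sigma a.
pose b1 := x ord0.
pose b2 := x i1.
have Eb1 : b1 = sig * a ord0 by rewrite /b1 /x /xv.
have Eb2 : b2 = sig * a i1 by rewrite /b2 /x /xv.
have Emid i : (i != ord_max) && (i != ord0) && (i != i1) -> x i = a i.
  move=> /andP [/andP [ni n0] n1]; rewrite /x /xv (negbTE ni).
  by case: i n0 n1 {ni} => [[|[|i]] Hi].
pose P3 i := (i != ord_max) && (i != ord0) && (i != i1).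
pose Rv (w : K) := \sum_(i < k2.+3 | P3 i) a i * w ^+ i.+1.
pose Rdv (w : K) := \sum_(i < k2.+3 | P3 i) a i * (w ^+ i *+ i.+1).
pose C (w : K) : K := b1 * b2 - 2 * b2 ^+ 2 * w.
pose Bf (w : K) : K := C w * (b2 - w ^+ k2.+1) + 4 * b2 ^+ 3 * w.
pose Af (w : K) : K := C w * w ^+ k2 - 4 * b2 ^+ 3.
pose Vf (w : K) := Af w * (Pa a).[w] - Af w * Rv w - Bf w * Rdv w.
have st := sig_top ind.
apply: (@assemble _ _ a 2 ind k_gt0 ('X_ord0 ^+ 2 * 'X_i1 ^+ 2)
          (fun i => if i == ord_max then 0 else 1) Bf Vf).
- by rewrite eqxx.
- rewrite rmorphM !rmorphXn /= !mmapX !mmap1U /=.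
  by rewrite !expr1n mulr1 oner_neq0.
move=> w Iw IP.
have Ib1 : integralOver (phix x) b1 by apply: I_x.
have Ib2 : integralOver (phix x) b2 by apply: I_x.
have In (n : nat) : integralOver (phix x) n%:R by apply: integral_natr.
have IRv : integralOver (phix x) (Rv w).
  apply: integral_sum => i Hi; apply: integral_mul; last exact: integral_exp.
  by rewrite -Emid //; apply: I_x.
have IRdv : integralOver (phix x) (Rdv w).
  apply: integral_sum => i Hi; apply: integral_mul.
    by rewrite -Emid //; apply: I_x.
  by rewrite -mulr_natl; apply: integral_mul; [apply: integral_natr|apply: integral_exp].
have IC : integralOver (phix x) (C w).
  apply: integral_sub; first exact: integral_mul.
  apply: integral_mul => //; apply: integral_mul => //; exact: integral_exp.
have IB : integralOver (phix x) (Bf w).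
  apply: integral_add; apply: integral_mul => //.
    by apply: integral_sub => //; apply: integral_exp.
  by apply: integral_mul => //; apply: integral_exp.
have IA : integralOver (phix x) (Af w).
  apply: integral_sub; first by apply: integral_mul => //; apply: integral_exp.
  by apply: integral_mul => //; apply: integral_exp.
split => //.
  apply: integral_sub; first apply: integral_sub; by apply: integral_mul.
have split3 (F : 'I_k2.+3 -> K) :
    \sum_i F i = F ord_max + F ord0 + F i1 + \sum_(i | P3 i) F i.
  by rewrite (bigD1 ord_max) // (bigD1 ord0) // (bigD1 i1) //= !addrA.
have EP : sig * (Pa a).[w] = (w ^+ k2.+3 + b2 * w ^+ 2 + b1 * w) + sig * Rv w.
  rewrite hornerPa mulr_sumr split3 /Rv mulr_sumr.
  have T1 : sig * (a ord_max * w ^+ (@ord_max k2.+2).+1) = w ^+ k2.+3.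
    by rewrite mulrA st mul1r.
  have T2 : sig * (a ord0 * w ^+ (@ord0 k2.+2).+1) = b1 * w.
    by rewrite mulrA -Eb1 expr1.
  have T3 : sig * (a i1 * w ^+ i1.+1) = b2 * w ^+ 2.
    by rewrite mulrA -Eb2.
  rewrite T1 T2 T3; move: (\sum_(i | P3 i) _) => S; ring.
have EdP : sig * (Pa a)^`().[w] = (w ^+ k2.+2 + 2 * b2 * w + b1) + sig * Rdv w.
  rewrite hornerdPa mulr_sumr split3 /Rdv mulr_sumr.
  have T1 : sig * (a ord_max * (w ^+ (@ord_max k2.+2) *+ (@ord_max k2.+2).+1))
      = w ^+ k2.+2.
    by rewrite mulrA st mul1r -mulr_natl hk3 mul1r.
  have T2 : sig * (a ord0 * (w ^+ (@ord0 k2.+2) *+ (@ord0 k2.+2).+1)) = b1.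
    by rewrite mulrA -Eb1 expr0 mulr1n mulr1.
  have T3 : sig * (a i1 * (w ^+ i1 *+ i1.+1)) = 2 * b2 * w.
    by rewrite mulrA -Eb2 expr1 -mulr_natl mulrA [b2 * _]mulrC.
  rewrite T1 T2 T3; move: (\sum_(i | P3 i) _) => S; ring.
have Er : phix x ('X_ord0 ^+ 2 * 'X_i1 ^+ 2) = b1 ^+ 2 * b2 ^+ 2.
  by rewrite rmorphM !rmorphXn /= !phiX.
have Bez := bez2 w b1 b2 k2.
rewrite Er -Bez EdP.
have -> : sig * Vf w = Af w * (sig * (Pa a).[w]) - sig * (Af w * Rv w + Bf w * Rdv w).
  by rewrite /Vf; ring.
rewrite EP /Bf /Af /C; ring.
Qed.
Unset Implicit Arguments.
Theorem lemma5p2 (K : fieldType) (d : nat) (a : 'I_d -> K) :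
  (2 <= d)%N ->
  alg_indep_prime a ->
  (forall p : nat, p \in [pchar K] -> (p <= d)%N) ->
  forall z0 : K,
    ~ parabolic_periodic_point (\sum_(i < d) a i *: (polyX K) ^+ i.+1) z0.
Proof.
case: d a => [|[|k1]] a // _ ind _ z0.
have [hk | hk] := eqVneq (k1.+1%:R : K) 0.
  case: k1 a ind hk => [|k2] a ind hk.
    by move/eqP: hk; rewrite mulr1n oner_eq0.
  by apply: (case2 ind); rewrite hk.
exact: (case1 ind hk).
Qed.
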